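(* Let $H=H(V,w)$ be a weighted graph and let $\mathcal D=\{H^j(V_j,w_j):1\le j\le m\}$ be a decomposition of $H$. For each vertex $u\in V$ let $\lambda(\mathcal D_u)=\sum_{j:\,u\in V_j}\lambda(H^j)$ (an empty sum being $0$). Then $$\lambda(H)\ \ge\ \min_{u\in V}\lambda(\mathcal D_u).$$ Writing $\lambda(\mathcal D)=\min_u\lambda(\mathcal D_u)$, equality holds if and only if there is a nonzero real vector $x=(x_u)_{u\in V}$ such that (1) $x_u=0$ for every $u$ with $\lambda(\mathcal D_u)>\lambda(\mathcal D)$, and (2) for every $1\le j\le m$, the restriction $x_j$ of $x$ to $V_j$ is either the zero vector or an eigenvector of the adjacency matrix $A(w_j)$ of $H^j$ for the eigenvalue $\lambda(H^j)$.
   Context: A weighted graph $H(V,w)$ consists of a finite vertex set $V$ and a function $w$ assigning a real number (possibly negative or zero) $w(uv)$ to every unordered pair $\{u,v\}$ of vertices, including pairs with $u=v$ (loops). Its adjacency matrix $A(w)$ is the real symmetric matrix indexed by $V$ with $(u,v)$-entry $w(uv)$ (so diagonal entries are $w(uu)$), and $\lambda(H)$ denotes the smallest eigenvalue of $A(w)$. A family $\{H^j(V_j,w_j):1\le j\le m\}$ of weighted graphs is a decomposition of $H(V,w)$ if $V_j\subseteq V$ for all $j$ and $w(uv)=\sum_{j=1}^m w_j(uv)$ for all unordered pairs $u,v\in V$, where $w_j(uv)$ is taken to be $0$ if $u\notin V_j$ or $v\notin V_j$. *)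

(* Defs.v *)
From HB Require Import structures.
From mathcomp Require Import all_boot all_order all_algebra.
Set Implicit Arguments. Unset Strict Implicit. Unset Printing Implicit Defensive.
Import Order.TTheory GRing.Theory Num.Theory.
Local Open Scope ring_scope.

(* Vertex set V = 'I_N (any nonempty finite set, up to relabelling).
   A weight function is a map V -> V -> R (symmetry assumed separately). *)

Definition adjmx (R : rcfType) (N : nat) (w : 'I_N -> 'I_N -> R) : 'M[R]_N :=
  \matrix_(u, v) w u v.

Definition subadjmx (R : rcfType) (N : nat) (Vj : {set 'I_N})
    (wj : 'I_N -> 'I_N -> R) : 'M[R]_#|Vj| :=
  \matrix_(a, b) wj (enum_val a) (enum_val b).

Definition restr (R : rcfType) (N : nat) (Vj : {set 'I_N}) (x : 'rV[R]_N)
    : 'rV[R]_#|Vj| :=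
  \row_a x 0 (enum_val a).

Definition is_min_eig (R : rcfType) (k : nat) (A : 'M[R]_k) (l : R) : Prop :=
  eigenvalue A l /\ (forall a, eigenvalue A a -> l <= a).

(* v is an eigenvector of A for eigenvalue l (row convention, as in
   mathcomp's [eigenvalue]; A is symmetric in our use) *)
Definition is_eigvec (R : rcfType) (k : nat) (A : 'M[R]_k) (l : R)
    (v : 'rV[R]_k) : Prop :=
  v != 0 /\ v *m A = l *: v.

Definition lamDu (R : rcfType) (N m : nat) (Vs : 'I_m -> {set 'I_N})
    (lam : 'I_m -> R) (u : 'I_N) : R :=
  \sum_(j < m | u \in Vs j) lam j.

Definition lamD (R : rcfType) (n m : nat) (Vs : 'I_m -> {set 'I_n.+1})
    (lam : 'I_m -> R) : R :=
  \big[Num.min/lamDu Vs lam ord0]_(u < n.+1) lamDu Vs lam u.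

(* Main.v *)
Require Import Defs.
From HB Require Import structures.
From mathcomp Require Import all_boot all_order all_algebra.
From mathcomp Require Import ring lra.
From mathcomp.real_closed Require Import complex.
Import Order.TTheory GRing.Theory Num.Theory.
Local Open Scope ring_scope.

Lemma rayleigh (R : rcfType) k (B : 'M[R]_k) (mu : R) :
  B^T = B -> (forall a, eigenvalue B a -> mu <= a) ->
  forall x : 'rV_k, mu * (x *m x^T) 0 0 <= (x *m B *m x^T) 0 0.
Proof.
move=> Bsym Bmin x.
pose f : {rmorphism R -> R[i]} := real_complex R.
have freal r : f r \is Num.real by apply/complex_realP; exists r.
have fconj r : ((f r)^*)%R = f r by apply: conj_Creal.
pose Bc := map_mx f B.
have Bcc : (Bc ^t* )%sesqui = Bc.
  by apply/matrixP=> i j; rewrite !mxE fconj; congr (f _); rewrite -{1}Bsym mxE.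
have Bn : Bc \is normalmx by apply/normalmxP; rewrite Bcc.
have /orthomx_spectralP BcE := Bn.
set P := spectralmx Bc in BcE; set d := spectral_diag Bc in BcE.
have Pu : P \is unitarymx := spectral_unitarymx Bc.
have PPt : P *m (P ^t* )%sesqui = 1%:M by apply/unitarymxP.
have PtP : (P ^t* )%sesqui *m P = 1%:M.
  by rewrite -invmx_unitary // mulVmx // unitarymx_unit.
rewrite invmx_unitary // in BcE.
have Bh : Bc \is hermsymmx.
  apply: realsym_hermsym.
    apply/is_hermitianmxP; rewrite expr0 scale1r.
    by apply/matrixP=> i j; rewrite !mxE; congr (f _); rewrite -{1}Bsym mxE.
  by apply/mxOverP=> a b; rewrite mxE.
have dreal i : d 0 i \is Num.real.
  by have /mxOverP := hermitian_spectral_diag_real Bh; apply.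
have dge i : f mu <= d 0 i.
  have [r dr] := complex_realP _ (dreal i).
  rewrite dr lecR; apply: Bmin.
  rewrite eigenvalue_root_char -(fmorph_root f) map_char_poly -/Bc.
  have -> : f r = d 0 i by rewrite dr.
  rewrite -eigenvalue_root_char; apply/eigenvalueP.
  exists ('e_i *m P).
    rewrite BcE !mulmxA -(mulmxA 'e_i P) PPt mulmx1 -(rowE i (diag_mx d)) row_diag_mx.
    by rewrite -scalemxAl.
  apply/eqP=> /(congr1 (mulmx^~ (P ^t* )%sesqui)).
  rewrite -mulmxA PPt mulmx1 mul0mx => /matrixP/(_ 0 i).
  by rewrite !mxE !eqxx /= => /eqP; rewrite oner_eq0.
pose xc := map_mx f x.
pose y := xc *m (P ^t* )%sesqui.
have xcE : xc = y *m P by rewrite /y -mulmxA PtP mulmx1.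
have xcT : xc^T = (P ^t* )%sesqui *m (y ^t* )%sesqui.
  have -> : xc^T = (xc ^t* )%sesqui.
    by apply/matrixP=> i j; rewrite !mxE fconj.
  by rewrite xcE trmx_mul map_mxM.
have fT : xc^T = map_mx f (x^T) by apply/matrixP=> i j; rewrite !mxE.
rewrite -lecR.
have -> : ((x *m B *m x^T) 0 0)%:C%C = \sum_i d 0 i * (y 0 i * (y 0 i)^*)%R.
  have -> : ((x *m B *m x^T) 0 0)%:C%C = (xc *m Bc *m xc^T) 0 0.
    by rewrite -[_%:C%C]/(f _) fT -!map_mxM [RHS]mxE.
  rewrite xcT xcE BcE !mulmxA -(mulmxA y P) PPt mulmx1.
  rewrite -(mulmxA _ P) PPt mulmx1 mul_mx_diag mxE.
  by apply: eq_bigr=> i _; rewrite !mxE mulrA [_ * d 0 i]mulrC -mulrA.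
have -> : (mu * (x *m x^T) 0 0)%:C%C = f mu * \sum_i (y 0 i * (y 0 i)^*)%R.
  rewrite -[_%:C%C]/(f _) rmorphM /=; congr (_ * _).
  have -> : f ((x *m x^T) 0 0) = (xc *m xc^T) 0 0.
    by rewrite fT -map_mxM [RHS]mxE.
  rewrite xcT xcE !mulmxA -(mulmxA y P) PPt mulmx1 mxE.
  by apply: eq_bigr=> i _; rewrite !mxE.
rewrite mulr_sumr; apply: ler_sum=> i _.
by apply: ler_wpM2r => //; apply: mul_conjC_ge0.
Qed.
Lemma qf_sym (R : comNzRingType) k (C : 'M[R]_k) (u v : 'rV_k) : C^T = C ->
  (u *m C *m v^T) 0 0 = (v *m C *m u^T) 0 0.
Proof.
move=> Cs; have -> : (u *m C *m v^T) 0 0 = ((u *m C *m v^T)^T) 0 0 by rewrite [RHS]mxE.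
by rewrite !trmx_mul !trmxK Cs mulmxA.
Qed.

Lemma qf_symM (R : comNzRingType) k (C : 'M[R]_k) (u v : 'rV_k) : C^T = C ->
  u *m C *m v^T = v *m C *m u^T.
Proof.
move=> Cs; apply/matrixP=> i j; rewrite !ord1; exact: qf_sym.
Qed.

Lemma sumsq_eq0 (R : rcfType) k (z : 'rV[R]_k) : (z *m z^T) 0 0 = 0 -> z = 0.
Proof.
rewrite mxE => /eqP; rewrite psumr_eq0 => [/allP H|i _]; last first.
  by rewrite mxE -expr2 sqr_ge0.
apply/rowP=> i; have := H i (mem_index_enum i); rewrite mxE /= -expr2.
by rewrite sqrf_eq0 mxE => /eqP.
Qed.

Lemma psd_kernel (R : rcfType) k (C : 'M[R]_k) : C^T = C ->
  (forall z : 'rV_k, 0 <= (z *m C *m z^T) 0 0) ->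
  forall y : 'rV_k, (y *m C *m y^T) 0 0 = 0 -> y *m C = 0.
Proof.
move=> Cs Cpsd y qy; set z := y *m C.
have e t : ((y - t *: z) *m C *m (y - t *: z)^T) 0 0 =
   - 2 * t * (z *m z^T) 0 0 + t ^+ 2 * (z *m C *m z^T) 0 0.
  have -> : (y - t *: z)^T = y^T - t *: z^T by apply/matrixP=> i j; rewrite !mxE.
  rewrite !mulmxBl !mulmxBr -!scalemxAl -!scalemxAr (@qf_symM _ _ C z y Cs) -/z.
  move: (z *m z^T) (z *m C *m z^T) (y *m C *m y^T) qy => s c q qy.
  rewrite !mxE qy; ring.
clearbody z.
have cge := Cpsd z; have sge : 0 <= (z *m z^T) 0 0.
  by rewrite mxE sumr_ge0 // => i _; rewrite mxE -expr2 sqr_ge0.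
set s := (z *m z^T) 0 0 in e sge *; set c := (z *m C *m z^T) 0 0 in e cge *.
apply: sumsq_eq0; rewrite -/s.
pose t := s / (c + 1).
have c1 : c + 1 != 0 by rewrite lt0r_neq0 // ltr_wpDl.
have ht : s = t * (c + 1) by rewrite /t divfK.
have := Cpsd (y - t *: z); rewrite e => h.
clearbody t s c.
have t0 : t = 0 by nra.
by move: ht; rewrite t0 mul0r.
Qed.
Lemma qfE (R : comNzRingType) k (B : 'M[R]_k) (x : 'rV_k) :
  (x *m B *m x^T) 0 0 = \sum_i \sum_j x 0 i * B i j * x 0 j.
Proof.
rewrite mxE; under eq_bigr => j _ do rewrite !mxE mulr_suml.
by rewrite exchange_big.
Qed.

Lemma nmE (R : comNzRingType) k (x : 'rV[R]_k) :
  (x *m x^T) 0 0 = \sum_i x 0 i ^+ 2.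
Proof. by rewrite mxE; apply: eq_bigr => i _; rewrite mxE expr2. Qed.

Lemma sum_restr (R : comNzRingType) N (V : {set 'I_N}) (F : 'I_N -> R) :
  \sum_(a < #|V|) F (enum_val a) = \sum_u (if u \in V then F u else 0).
Proof. by rewrite -big_enum_val big_mkcond. Qed.

Lemma qf_sub (R : rcfType) N (V : {set 'I_N}) (W : 'I_N -> 'I_N -> R) (x : 'rV[R]_N) :
  (restr V x *m subadjmx V W *m (restr V x)^T) 0 0 =
  \sum_u \sum_v (if (u \in V) && (v \in V) then x 0 u * W u v * x 0 v else 0).
Proof.
rewrite qfE.
transitivity (\sum_(a < #|V|) \sum_(b < #|V|) x 0 (enum_val a) * W (enum_val a) (enum_val b) * x 0 (enum_val b)).
  by apply: eq_bigr => i0 _; apply: eq_bigr => j0 _; rewrite !mxE.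
under eq_bigr => a _ do rewrite (sum_restr _ _ V (fun v => x 0 (enum_val a) * W (enum_val a) v * x 0 v)).
rewrite (sum_restr _ _ V (fun u => \sum_v (if v \in V then x 0 u * W u v * x 0 v else 0))).
apply: eq_bigr => u _; case: (u \in V) => /=; last by rewrite big1.
by [].
Qed.

Lemma nm_sub (R : rcfType) N (V : {set 'I_N}) (x : 'rV[R]_N) :
  (restr V x *m (restr V x)^T) 0 0 = \sum_u (if u \in V then x 0 u ^+ 2 else 0).
Proof.
rewrite nmE; under eq_bigr => a _ do rewrite mxE.
exact: (sum_restr _ _ V (fun u => x 0 u ^+ 2)).
Qed.

Lemma decomp_qf (R : rcfType) N m (w : 'I_N -> 'I_N -> R) (Vs : 'I_m -> {set 'I_N})
  (ws : 'I_m -> 'I_N -> 'I_N -> R) (x : 'rV[R]_N) :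
  (forall u v, w u v = \sum_(j < m | (u \in Vs j) && (v \in Vs j)) ws j u v) ->
  (x *m adjmx w *m x^T) 0 0 =
  \sum_j (restr (Vs j) x *m subadjmx (Vs j) (ws j) *m (restr (Vs j) x)^T) 0 0.
Proof.
move=> hw; under [RHS]eq_bigr => j _ do rewrite qf_sub.
rewrite qfE [RHS]exchange_big /=; apply: eq_bigr => u _.
rewrite [RHS]exchange_big /=; apply: eq_bigr => v _.
rewrite mxE hw mulr_sumr mulr_suml big_mkcond /=.
by apply: eq_bigr => j _; case: ifP.
Qed.

Lemma decomp_nm (R : rcfType) N m (Vs : 'I_m -> {set 'I_N}) (lam : 'I_m -> R)
  (x : 'rV[R]_N) :
  \sum_j lam j * (restr (Vs j) x *m (restr (Vs j) x)^T) 0 0 =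
  \sum_u lamDu Vs lam u * x 0 u ^+ 2.
Proof.
under eq_bigr => j _ do rewrite nm_sub mulr_sumr.
rewrite exchange_big /=; apply: eq_bigr => u _.
rewrite /lamDu big_distrl /= [RHS]big_mkcond /=.
by apply: eq_bigr => j _; case: ifP => _; rewrite ?mulr0 ?mul0r.
Qed.

Lemma shiftE (R : rcfType) k (B : 'M[R]_k) (l : R) (z : 'rV_k) :
  (z *m (B - l%:M) *m z^T) 0 0 = (z *m B *m z^T) 0 0 - l * (z *m z^T) 0 0.
Proof.
by rewrite mulmxBr mul_mx_scalar mulmxBl -scalemxAl !mxE.
Qed.

Lemma nm_pos (R : rcfType) k (v : 'rV[R]_k) : v != 0 -> 0 < (v *m v^T) 0 0.
Proof.
move=> vn; rewrite lt_def; apply/andP; split.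
  by apply: contra vn => /eqP /sumsq_eq0 ->.
by rewrite nmE sumr_ge0 // => i _; rewrite sqr_ge0.
Qed.

Lemma eig_qf (R : rcfType) k (B : 'M[R]_k) (l : R) (v : 'rV_k) :
  v *m B = l *: v -> (v *m B *m v^T) 0 0 = l * (v *m v^T) 0 0.
Proof. by move=> e; rewrite e -scalemxAl mxE. Qed.

Theorem mainTheorem1 (R : rcfType) (n m : nat)
    (w : 'I_n.+1 -> 'I_n.+1 -> R)
    (Vs : 'I_m -> {set 'I_n.+1})
    (ws : 'I_m -> 'I_n.+1 -> 'I_n.+1 -> R)
    (lamH : R) (lam : 'I_m -> R) :
  (forall u v, w u v = w v u) ->
  (forall j u v, ws j u v = ws j v u) ->
  (forall u v, w u v = \sum_(j < m | (u \in Vs j) && (v \in Vs j)) ws j u v) ->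
  is_min_eig (adjmx w) lamH ->
  (forall j, Vs j != set0 -> is_min_eig (subadjmx (Vs j) (ws j)) (lam j)) ->
  lamD Vs lam <= lamH /\
  (lamH = lamD Vs lam <->
   exists x : 'rV[R]_n.+1, x != 0 /\
     (forall u, lamD Vs lam < lamDu Vs lam u -> x 0 u = 0) /\
     (forall j, restr (Vs j) x = 0 \/
                is_eigvec (subadjmx (Vs j) (ws j)) (lam j) (restr (Vs j) x))).
Proof.
move=> wsym wssym hw [eigH minH] hj.
set L := lamD Vs lam.
have LleDu u : L <= lamDu Vs lam u by exact: bigmin_le.
set A := adjmx w.
have Asym : A^T = A by apply/matrixP => u v; rewrite !mxE.
set Aj := fun j => subadjmx (Vs j) (ws j).
have Ajsym j : (Aj j)^T = Aj j by apply/matrixP => a b; rewrite !mxE.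
have hjmin j a : eigenvalue (Aj j) a -> lam j <= a.
  case: (eqVneq (Vs j) set0) => [V0|Vn].
    move=> /eigenvalueP [v _ vn]; exfalso; move: vn; apply/negP; rewrite negbK.
    have c0 : #|Vs j| = 0%N by rewrite V0 cards0.
    by apply/eqP/rowP => i; move: (ltn_ord i); rewrite [X in (_ < X)%N]c0.
  by have [_ ] := hj j Vn; apply.
have qA (y : 'rV[R]_n.+1) : (y *m A *m y^T) 0 0 =
    \sum_j (restr (Vs j) y *m Aj j *m (restr (Vs j) y)^T) 0 0.
  exact: decomp_qf.
have gap j (y : 'rV[R]_n.+1) : lam j * (restr (Vs j) y *m (restr (Vs j) y)^T) 0 0 <=
    (restr (Vs j) y *m Aj j *m (restr (Vs j) y)^T) 0 0.
  exact: rayleigh (Ajsym j) (hjmin j) _.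
have low (y : 'rV[R]_n.+1) : L * (y *m y^T) 0 0 <= \sum_u lamDu Vs lam u * y 0 u ^+ 2.
  rewrite nmE mulr_sumr; apply: ler_sum => u _.
  by apply: ler_wpM2r; [exact: sqr_ge0 | exact: LleDu].
have mid (y : 'rV[R]_n.+1) : \sum_u lamDu Vs lam u * y 0 u ^+ 2 <= (y *m A *m y^T) 0 0.
  rewrite -decomp_nm qA; apply: ler_sum => j _; exact: gap.
have [v vA vn] := eigenvalueP eigH.
have qv : (v *m A *m v^T) 0 0 = lamH * (v *m v^T) 0 0 by exact: eig_qf.
have vpos := @nm_pos _ _ _ vn.
have part1 : L <= lamH.
  rewrite -(ler_pM2r vpos) -qv; apply: le_trans (low v) (mid v).
split => //; split.
- move=> eqH.
  pose S1 := \sum_j ((restr (Vs j) v *m Aj j *m (restr (Vs j) v)^T) 0 0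
               - lam j * (restr (Vs j) v *m (restr (Vs j) v)^T) 0 0).
  pose S2 := \sum_u (lamDu Vs lam u - L) * v 0 u ^+ 2.
  have S1ge : 0 <= S1 by apply: sumr_ge0 => j _; rewrite subr_ge0 gap.
  have S2ge : 0 <= S2.
    by apply: sumr_ge0 => u _; rewrite mulr_ge0 ?sqr_ge0 // subr_ge0 LleDu.
  have sum : S1 + S2 = 0.
    have e1 : S1 = (v *m A *m v^T) 0 0 - \sum_u lamDu Vs lam u * v 0 u ^+ 2.
      by rewrite /S1 sumrB -decomp_nm qA.
    have e2 : S2 = \sum_u lamDu Vs lam u * v 0 u ^+ 2 - L * (v *m v^T) 0 0.
      by rewrite /S2 nmE mulr_sumr -sumrB; apply: eq_bigr => u _; rewrite mulrBl.
    by rewrite e1 e2 qv eqH addrA subrK subrr.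
  have S10 : S1 = 0 by lra.
  have S20 : S2 = 0 by lra.
  exists v; split => //; split.
  + move=> u Lu; move/eqP: S20; rewrite psumr_eq0 => [/allP /(_ u (mem_index_enum u))|].
      rewrite /= mulf_eq0 subr_eq0 sqrf_eq0 => /orP [/eqP e|/eqP //].
      by move: Lu; rewrite e ltxx.
    by move=> u' _; rewrite mulr_ge0 ?sqr_ge0 // subr_ge0 LleDu.
  + move=> j.
    have gj : (restr (Vs j) v *m Aj j *m (restr (Vs j) v)^T) 0 0
       - lam j * (restr (Vs j) v *m (restr (Vs j) v)^T) 0 0 = 0.
      move/eqP: S10; rewrite psumr_eq0 => [/allP /(_ j (mem_index_enum j)) /eqP //|].
      by move=> j' _; rewrite subr_ge0 gap.
    have ker : restr (Vs j) v *m (Aj j - (lam j)%:M) = 0.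
      apply: psd_kernel.
      - by rewrite linearB /= Ajsym tr_scalar_mx.
      - by move=> z; rewrite shiftE subr_ge0; exact: rayleigh (Ajsym j) (hjmin j) _.
      - by rewrite shiftE.
    have eig : restr (Vs j) v *m Aj j = lam j *: restr (Vs j) v.
      by apply/eqP; rewrite -subr_eq0 -mul_mx_scalar -mulmxBr ker.
    case: (eqVneq (restr (Vs j) v) 0) => [->|rn]; [by left | by right].
- move=> [x [xn [h1 h2]]].
  have xpos := @nm_pos _ _ _ xn.
  have qx : (x *m A *m x^T) 0 0 = L * (x *m x^T) 0 0.
    rewrite qA.
    transitivity (\sum_j lam j * (restr (Vs j) x *m (restr (Vs j) x)^T) 0 0).
      apply: eq_bigr => j _; case: (h2 j) => [->|[_ e]].
        by rewrite !mul0mx !mxE mulr0.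
      exact: eig_qf.
    rewrite decomp_nm nmE mulr_sumr; apply: eq_bigr => u _.
    have := LleDu u; rewrite le_eqVlt => /orP [/eqP <- //|/h1 ->].
    by rewrite expr2 !mulr0.
  have := @rayleigh _ _ _ _ Asym minH x; rewrite qx (ler_pM2r xpos) => le1.
  by apply/le_anti; rewrite le1 part1.
Qed.
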